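(* Let $C:\mathbb Z^d\times\mathbb Z^d\to[0,\infty)$ satisfy (A2) and (A3). Then there exist $\gamma\in(0,1)$, $\Theta_1>0$ and $\kappa_3>0$, depending only on $\kappa_1,\kappa_2,N_0,d,\alpha$, such that for all $x\in\mathbb Z^d$ and $r>\Theta_1$, $$\mu(\{y\in B^1(x,r):C(x,y)\ge\kappa_3|x-y|^{-d-\alpha}\})\ge\gamma\,\mu(B^1(x,r)).$$ In particular, if $C(x,y)=\widetilde C(x-y)$ for some function $\widetilde C$, then $\mu(\{h\in B^1(0,r):\widetilde C(h)\ge\kappa_3|h|^{-d-\alpha}\})\ge\gamma\,\mu(B^1(0,r))$ for all $r>\Theta_1$.
   Context: Fix $d\ge1$, $\alpha\in(0,2)$. $\mu$ is counting measure; $B^1(x,r)=\{y\in\mathbb Z^d:|x-y|<r\}$. (A2) There is $\kappa_1>0$ with $C(x,y)\le\kappa_1|x-y|^{-d-\alpha}$ for all $x\ne y$. (A3) There are $N_0\in\mathbb N$, $\kappa_2>0$ such that for all $x\ne y$ in $\mathbb Z^d$ there are $z_0^{(x,y)}=x,\dots,z_l^{(x,y)}=y$ in $\mathbb Z^d$, $l\le N_0$, with $C(z_i^{(x,y)},z_{i+1}^{(x,y)})\ge\kappa_2|x-y|^{-d-\alpha}$ for $i<l$; and for every pair $(\zeta,\xi)$ at most $N_0$ pairs $(x,y)$ satisfy $\zeta=z_k^{(x,y)},\xi=z_{k+1}^{(x,y)}$ for some $k$. *)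

(* Defs.v *)
From HB Require Import structures.
From mathcomp Require Import all_boot all_order all_algebra.
From mathcomp Require Import all_classical all_reals all_analysis.
Set Implicit Arguments. Unset Strict Implicit. Unset Printing Implicit Defensive.
Import Order.TTheory GRing.Theory Num.Theory.
Local Open Scope ring_scope.
Local Open Scope classical_set_scope.

Definition pt (d : nat) := 'rV[int]_d.

Definition znorm (R : realType) (d : nat) (h : pt d) : R :=
  Num.sqrt (\sum_(i < d) ((h ord0 i)%:~R) ^+ 2).

Definition kern (R : realType) (d : nat) (alpha : R) (x y : pt d) : R :=
  (znorm R (x - y)) `^ (- (d%:R + alpha)).

Definition ball1 (R : realType) (d : nat) (x : pt d) (r : R) : set (pt d) :=
  [set y | znorm R (x - y) < r].

Definition mu (R : realType) (d : nat) (A : set (pt d)) : \bar R := counting A.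

Definition A2 (R : realType) (d : nat) (alpha : R) (C : pt d -> pt d -> R)
    (kappa1 : R) : Prop :=
  forall x y : pt d, x != y -> C x y <= kappa1 * kern alpha x y.

(* (A3): z (x,y) is the list [z_1; ...; z_l] of the path
   x = z_0, z_1, ..., z_l = y (so l = size (z x y)). *)
Definition A3 (R : realType) (d : nat) (alpha : R) (C : pt d -> pt d -> R)
    (N0 : nat) (kappa2 : R) : Prop :=
  exists z : pt d -> pt d -> seq (pt d),
    (forall x y : pt d, x != y ->
       [/\ last x (z x y) = y,
           (size (z x y) <= N0)%N &
           forall k : nat, (k < size (z x y))%N ->
             kappa2 * kern alpha x y <= C (nth x (x :: z x y) k) (nth x (z x y) k)])
    /\
    (forall zeta xi : pt d,
       (@counting _ R) [set xy : pt d * pt d | xy.1 != xy.2 /\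
              exists2 k : nat, (k < size (z xy.1 xy.2))%N &
                zeta = nth xy.1 (xy.1 :: z xy.1 xy.2) k /\
                xi = nth xy.1 (z xy.1 xy.2) k]
       <= (N0%:R)%:E)%E.

(* Main.v *)
Require Import Defs.
From HB Require Import structures.
From mathcomp Require Import all_boot all_order all_algebra.
From mathcomp Require Import all_classical all_reals all_analysis.
From mathcomp Require Import finmap zify ring lra.
Import Order.TTheory GRing.Theory Num.Theory.
Set Implicit Arguments. Unset Strict Implicit. Unset Printing Implicit Defensive.
Local Open Scope ring_scope.
Local Open Scope classical_set_scope.

Lemma counting_inj_image (R : realType) (K : finType) (T : choiceType) (f : K -> T)
  (P : pred K) : injective f ->
  (@counting T R) (f @` [set k | P k]) = (#|P|%:R)%:E.
Proof.
move=> fi.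
have fin : finite_set [set k | P k] by exact: finite_finset.
rewrite /counting asboolT; last exact: finite_image.
rewrite fset_set_image //.
have /eqP -> := introT (card_in_imfsetP f (fset_set [set k | P k])) (in2W fi).
congr ((_)%:R)%:E.
have -> : fset_set [set k | P k] = [fset x in P]%fset.
  apply/fsetP => k; rewrite in_fset_set // !inE /=.
  by apply/idP/idP => [/set_mem|] //= Pk; apply/mem_set.
by rewrite card_finset.
Qed.

Lemma counting_le (R : realType) (T : choiceType) (A B : set T) :
  A `<=` B -> ((@counting T R) A <= counting B)%E.
Proof.
move=> AB; rewrite /counting.
case: (asboolP (finite_set B)) => fB; last by rewrite leey.
have fA : finite_set A by exact: sub_finite_set fB.
rewrite asboolT // lee_fin ler_nat.
by apply: fsubset_leq_card; rewrite -fset_set_sub.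
Qed.
Definition cubeK (d n : nat) := {ffun 'I_d -> 'I_(n.*2.+1)}.
Definition cpt (d n : nat) (x : pt d) (k : cubeK d n) : pt d :=
  x + \row_i ((k i : nat)%:Z - n%:Z).
Arguments cpt {d n}.

Lemma cpt_inj d n (x : pt d) : injective (@cpt d n x).
Proof.
move=> k1 k2 /addrI /matrixP H; apply/ffunP => i; apply/val_inj.
have := H ord0 i; rewrite !mxE => /eqP; rewrite -subr_eq0 opprB addrA subrK subr_eq0.
by move/eqP => [].
Qed.

Lemma cpt_surj d n (x y : pt d) :
  (forall i, `|(y - x) ord0 i| <= n%:Z) -> exists k : cubeK d n, cpt x k = y.
Proof.
move=> H.
exists [ffun i => inord (absz ((y - x) ord0 i + n%:Z))].
rewrite /cpt; apply/matrixP => a i; rewrite (ord1 a) !mxE ffunE.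
have Hi := H i; rewrite !mxE in Hi.
rewrite !mxE.
rewrite inordK; last first.
  move: Hi; set w := (y ord0 i - x ord0 i) => Hi.
  lia.
move: Hi; set w := (y ord0 i - x ord0 i) => Hi.
have -> : ((absz (w + n%:Z))%:Z = w + n%:Z) by lia.
by rewrite addrK /w addrC subrK.
Qed.

Lemma card_cube d n : #|{: cubeK d n}| = (n.*2.+1 ^ d)%N.
Proof. by rewrite card_ffun !card_ord. Qed.

Section Norm.
Variable R : realType.
Variable d : nat.
Implicit Types v : pt d.

Lemma sq_ge0 v : 0 <= \sum_(i < d) ((v ord0 i)%:~R : R) ^+ 2.
Proof. by apply: sumr_ge0 => i _; exact: sqr_ge0. Qed.

Lemma znorm_ge0 v : 0 <= znorm R v.
Proof. exact: sqrtr_ge0. Qed.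

Lemma znorm_coord v i : (`|v ord0 i|%:~R : R) <= znorm R v.
Proof.
rewrite /znorm intr_norm -sqrtr_sqr ler_sqrt; last exact: sq_ge0.
rewrite (bigD1 i) //= lerDl.
by apply: sumr_ge0 => j _; exact: sqr_ge0.
Qed.

Lemma znorm_le v (m : nat) : (forall i, `|v ord0 i| <= m%:Z) -> znorm R v <= d%:R * m%:R.
Proof.
move=> H; rewrite /znorm -[X in _ <= X]ger0_norm ?mulr_ge0 // -sqrtr_sqr ler_sqrt ?sqr_ge0 //.
apply: (@le_trans _ _ (\sum_(i < d) (m%:R : R) ^+ 2)).
  apply: ler_sum => i _.
  have h : `|(v ord0 i)%:~R : R| <= m%:R by rewrite -intr_norm; change (((`|v ord0 i|)%:~R : R) <= (m%:Z)%:~R); rewrite (ler_int R) (H i).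
  by rewrite -real_normK ?num_real // !expr2; apply: ler_pM.
rewrite sumr_const card_ord -mulr_natr exprMn.
have hm := sqr_ge0 (m%:R : R).
case: d => [|d']; first by rewrite mulr0n; apply: mulr_ge0.
have hd : (1 : R) <= d'.+1%:R by rewrite ler1n.
set D := (d'.+1%:R : R) in hd *; set Q := (m%:R : R) ^+ 2 in hm *.
rewrite expr1n !mul1r exprMn -/Q -mulr_natr -/D. nra.
Qed.

Lemma znormN v : znorm R (- v) = znorm R v.
Proof. by rewrite /znorm; congr Num.sqrt; apply: eq_bigr => i _; rewrite mxE mulrNz sqrrN. Qed.

Lemma znormB (x y : pt d) : znorm R (x - y) = znorm R (y - x).
Proof. by rewrite -znormN opprB. Qed.

Lemma znorm0 : znorm R (0 : pt d) = 0.
Proof. by rewrite /znorm big1 ?sqrtr0 // => i _; rewrite mxE expr0n. Qed.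

End Norm.

Section Balls.
Variable R : realType.
Variable d : nat.

Lemma ball_sub_cube (x : pt d) (s : R) y : ball1 x s y ->
  forall i, `|(y - x) ord0 i| <= (Num.trunc s)%:Z.
Proof.
rewrite /ball1 /= => hy i.
have h1 := @znorm_coord R d (y - x) i.
rewrite znormB in h1.
have s0 : 0 <= s by apply: ltW; apply: le_lt_trans hy; exact: znorm_ge0.
have /andP[_ h2] := truncn_itv s0.
have h3 : ((`|(y - x) ord0 i|)%:~R : R) < ((Num.trunc s).+1)%:Z%:~R.
  by apply: (le_lt_trans h1); apply: (lt_trans hy).
rewrite ltr_int in h3; move: h3; set c := (y - x) ord0 i; set t := Num.trunc s; lia.
Qed.

Lemma counting_ball_cube (x : pt d) (s r : R) : s <= r ->
  (@counting _ R) (ball1 x s) =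
  (#|[pred k : cubeK d (Num.trunc r) | `[< ball1 x s (cpt x k) >]]|%:R)%:E.
Proof.
move=> sr; rewrite -(@counting_inj_image R _ _ (cpt x)); last exact: cpt_inj.
congr counting; apply/seteqP; split => y.
  move=> hy.
  have [k hk] : exists k : cubeK d (Num.trunc r), cpt x k = y.
    apply: cpt_surj => i; apply: (le_trans (ball_sub_cube hy i)).
    by rewrite lez_nat; apply: le_truncn.
  by exists k => //=; apply/asboolP; rewrite hk.
by move=> [k /= /asboolP hk <-].
Qed.

Lemma count_ball_upper (x : pt d) (s : R) : 0 <= s ->
  ((@counting _ R) (ball1 x s) <= ((s *+ 2 + 1) ^+ d)%:E)%E.
Proof.
move=> s0; rewrite (counting_ball_cube x (lexx s)) lee_fin.
apply: (@le_trans _ _ (#|{: cubeK d (Num.trunc s)}|%:R)).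
  by rewrite ler_nat; apply: max_card.
rewrite card_cube natrX; apply: lerXn2r; rewrite ?nnegrE //.
  by rewrite addr_ge0 // mulrn_wge0.
have /andP[h _] := truncn_itv s0.
by rewrite -addn1 natrD -muln2 natrM mulr_natr lerD // lerMn2r.
Qed.

Lemma count_ball_lower (x : pt d) (s : R) (m : nat) : d%:R * m%:R < s ->
  ((((m.*2.+1) ^ d)%N%:R)%:E <= (@counting _ R) (ball1 x s))%E.
Proof.
move=> hs.
rewrite -card_cube.
have -> : #|{: cubeK d m}| = #|[pred k : cubeK d m | true]| by apply: eq_card.
rewrite -(@counting_inj_image R _ _ (cpt x)); last exact: cpt_inj.
apply: counting_le => y [k _ <-].
rewrite /ball1 /= /cpt opprD addrA subrr sub0r znormN.
apply: le_lt_trans hs; apply: znorm_le => i; rewrite mxE.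
have := ltn_ord (k i); set u := nat_of_ord (k i); lia.
Qed.

End Balls.

Lemma powN_le (R : realType) (a b p : R) : 0 < a -> a <= b -> 0 < p ->
  b `^ (- p) <= a `^ (- p).
Proof.
move=> a0 ab p0; rewrite !powRN lef_pV2 ?posrE ?powR_gt0 //; last exact: lt_le_trans ab.
by apply: ge0_ler_powR; rewrite ?nnegrE ?(ltW p0) ?(ltW a0) ?(ltW (lt_le_trans a0 ab)).
Qed.

Lemma znorm_gt0 (R : realType) d (v : pt d) : v != 0 -> 0 < znorm R v.
Proof.
move=> v0.
have [i hi] : exists i, v ord0 i != 0.
  apply/existsP; apply: contraR v0 => /existsPn H; apply/eqP/matrixP => a i.
  by rewrite (ord1 a) mxE; have := H i; rewrite negbK => /eqP.
apply: (lt_le_trans _ (znorm_coord R v i)).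
by rewrite ltr0z normr_gt0.
Qed.

Lemma counting_sub_cube (R : realType) d (x : pt d) (r : R) (S : set (pt d)) :
  S `<=` ball1 x r ->
  (@counting _ R) S =
  (#|[pred k : cubeK d (Num.trunc r) | `[< S (cpt x k) >]]|%:R)%:E.
Proof.
move=> Sr; rewrite -(@counting_inj_image R _ _ (cpt x)); last exact: cpt_inj.
congr counting; apply/seteqP; split => y.
  move=> hy.
  have [k hk] : exists k : cubeK d (Num.trunc r), cpt x k = y.
    by apply: cpt_surj => i; apply: (ball_sub_cube (Sr _ hy) i).
  by exists k => //=; apply/asboolP; rewrite hk.
by move=> [k /= /asboolP hk <-].
Qed.

Lemma counting_set1 (R : realType) (T : choiceType) (a : T) :
  (@counting T R) [set a] = 1%E.
Proof. by rewrite /counting asboolT ?finite_set1 // fset_set1 cardfs1. Qed.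
Lemma aux2 (R : realType) (d : nat) (u t r cL Dd NN Yc Bdc Gc Bc m : R) :
  (0 < d)%N -> 0 < cL -> 1 <= Dd -> 1 <= NN -> 0 <= Gc -> 0 <= Bdc -> 0 <= Bc ->
  (m *+ 2 + 1) ^+ d <= Yc + 1 -> u / 2 < m ->
  Yc <= NN * (Bdc + Gc) ->
  Bdc <= (t *+ 2 + 1) ^+ d -> 1 <= t -> t * 12 * NN = u ->
  Bc <= (r *+ 2 + 1) ^+ d -> r = cL * (Dd * u) -> 1 <= r -> 4 < u ->
  (2 * NN * (3 * cL * Dd) ^+ d)^-1 * Bc <= Gc.
Proof.
move=> d0 cL0 hD hN hG hBd hB hY hm hC hBad ht htu hBall hr hr1 hu.
pose U := u ^+ d.
have u0 : 0 <= u by lra.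
have h1 : U <= Yc + 1.
  apply: le_trans hY; apply: lerXn2r; rewrite ?nnegrE //; lra.
have h2 : Bdc <= (3 * t) ^+ d.
  apply: (le_trans hBad); apply: lerXn2r; rewrite ?nnegrE //; lra.
have h3 : (3 * t) ^+ d * (4 * NN) ^+ d = U.
  by rewrite -exprMn /U -htu; congr (_ ^+ _); ring.
have h4 : 4 * NN <= (4 * NN) ^+ d by apply: ler_eXnr => //; lra.
have h3t : 0 <= (3 * t) ^+ d by apply: exprn_ge0; lra.
have h5 : Bdc * (4 * NN) <= U.
  rewrite -h3; apply: (le_trans (ler_wpM2r _ h2)); first lra.
  by apply: ler_wpM2l.
have h6 : u <= U by apply: ler_eXnr => //; lra.
have h7 : U <= 2 * (NN * Gc).
  have : Yc <= NN * Bdc + NN * Gc by rewrite -mulrDr.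
  have e : Bdc * (4 * NN) = 4 * (NN * Bdc) by ring.
  rewrite e in h5.
  move: h5 h1 h6; set P1 := NN * Bdc; set P2 := NN * Gc; move=> *; lra.
have h8 : Bc <= (3 * cL * Dd) ^+ d * U.
  apply: (le_trans hBall); rewrite /U -exprMn; apply: lerXn2r; rewrite ?nnegrE.
  - by apply: addr_ge0 => //; rewrite mulrn_wge0 // hr; apply: mulr_ge0; nra.
  - by apply: mulr_ge0 => //; nra.
  have -> : 3 * cL * Dd * u = 3 * r by rewrite hr; ring.
  lra.
have K0 : 0 < (3 * cL * Dd) ^+ d by apply: exprn_gt0; nra.
have G0 : 0 < 2 * NN * (3 * cL * Dd) ^+ d by apply: mulr_gt0 => //; lra.
rewrite mulrC ler_pdivrMr //.
apply: (le_trans h8); apply: (le_trans (ler_wpM2l (ltW K0) h7)).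
by rewrite le_eqVlt; apply/orP; left; apply/eqP; ring.
Qed.

Lemma aux1 (R : realType) (k1 k2 c A B P : R) : 0 < k1 -> 0 < k2 -> 0 < A ->
  B * P = 1 -> c <= P -> k2 * c = k2 + k1 -> k2 * A <= k1 * (B * A) -> False.
Proof.
move=> h1 h2 hA hBP hcP hk c2.
have c3 : k2 <= k1 * B by rewrite -(ler_pM2r hA) -mulrA.
have hP : 0 < P.
  have : 1 <= c by nra.
  lra.
have c4 : k2 * P <= k1 by rewrite -[k1]mulr1 -hBP mulrA ler_pM2r.
nra.
Qed.

Section Main.
Variables (R : realType) (d : nat) (alpha kappa1 kappa2 : R) (N0 : nat).
Hypotheses (hd : (1 <= d)%N) (ha : 0 < alpha) (hk1 : 0 < kappa1) (hk2 : 0 < kappa2).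

Let p : R := d%:R + alpha.
Let cL : R := 1 + kappa1 / kappa2.
Let NN : nat := N0.+1.
Let M : R := (12 * d * NN)%:R.
Let k3 : R := kappa2 * M `^ (- p).
Let Th : R := 4 * cL * M * d%:R.
Let gam : R := (2 * NN%:R * (3 * cL * d%:R) ^+ d)^-1.

Variables (C : pt d -> pt d -> R) (z : pt d -> pt d -> seq (pt d)).
Hypotheses (hA2 : A2 alpha C kappa1)
  (hz : forall x y : pt d, x != y ->
       [/\ last x (z x y) = y,
           (size (z x y) <= N0)%N &
           forall k : nat, (k < size (z x y))%N ->
             kappa2 * kern alpha x y <= C (nth x (x :: z x y) k) (nth x (z x y) k)])
  (hcnt : forall zeta xi : pt d,
       ((@counting _ R) [set xy : pt d * pt d | xy.1 != xy.2 /\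
              exists2 k : nat, (k < size (z xy.1 xy.2))%N &
                zeta = nth xy.1 (xy.1 :: z xy.1 xy.2) k /\
                xi = nth xy.1 (z xy.1 xy.2) k]
       <= (N0%:R)%:E)%E).

Let Gs (x : pt d) (r : R) : set (pt d) :=
  [set y | ball1 x r y /\ y != x /\ (k3 * kern alpha x y <= C x y)].

Lemma hp : 1 <= p. Proof. rewrite /p; have : (1 <= d%:R :> R) by rewrite ler1n. have := ha; lra. Qed.
Lemma hL : 1 < cL. Proof. by rewrite /cL ltrDl divr_gt0. Qed.
Lemma hD : (1 : R) <= d%:R. Proof. by rewrite ler1n. Qed.
Lemma hM : (12 : R) <= M.
Proof.
rewrite /M !natrM; have h1 : (1 : R) <= NN%:R by rewrite ler1n.
have h2 := hD. nra.
Qed.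

Lemma main_count (x : pt d) (r : R) : Th < r ->
  gam * #|[pred k : cubeK d (Num.trunc r) | `[< ball1 x r (cpt x k) >]]|%:R
  <= #|[pred k : cubeK d (Num.trunc r) | `[< Gs x r (cpt x k) >]]|%:R.
Proof.
move=> hr.
have hp := hp; have hL := hL; have hD := hD; have hM := hM.
pose u := r / (cL * d%:R).
pose rho := d%:R * u.
pose t := rho / M.
have LD0 : 0 < cL * d%:R by apply: mulr_gt0; lra.
have hu : u * (cL * d%:R) = r by rewrite /u mulfVK //; apply: lt0r_neq0.
have hr_rho : r = cL * rho by rewrite -hu /rho; ring.
have ht : t * M = rho by rewrite /t mulfVK //; apply: lt0r_neq0; lra.
have hu4 : 4 * M < u.
  by rewrite /u ltr_pdivlMr //; move: hr; rewrite /Th; lra.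
have hN1 : (1 : R) <= NN%:R by rewrite ler1n.
have hMdef : M = 12 * d%:R * NN%:R by rewrite /M !natrM.
have hu1 : 4 < u by lra.
have rho_pos : 0 < rho by rewrite /rho; nra.
have rho_ge : u <= rho by rewrite /rho; nra.
have M_pos : 0 < M by lra.
have ht1 : 4 < t.
  have : 4 * M < t * M by rewrite ht; lra.
  by rewrite ltr_pM2r.
have t_le_rho : t <= rho by rewrite -ht; nra.
have rho_le_r : rho <= r by rewrite hr_rho; nra.
have r_pos : 0 < r by lra.
have t_pos : 0 < t by lra.
have t_le_r : t <= r by lra.
have p_pos : 0 < p by lra.
have cL_pos : 0 < cL by lra.
have hLp : cL <= cL `^ p by apply: le1r_powR => //; lra.
have hkL : kappa2 * cL = kappa2 + kappa1.
  by rewrite /cL; field; apply: lt0r_neq0.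
pose phi := @cpt d (Num.trunc r) x.
pose z1 := fun y => nth x (z x y) 0.
pose g := fun k : cubeK d (Num.trunc r) => odflt k [pick j | phi j == z1 (phi k)].
pose Yp := [pred k : cubeK d (Num.trunc r) | `[< ball1 x rho (phi k) >] && (phi k != x)].
pose Bad := [pred k : cubeK d (Num.trunc r) | `[< ball1 x t (phi k) >]].
pose Gp := [pred k : cubeK d (Num.trunc r) | `[< Gs x r (phi k) >]].
pose BG := [predU Bad & Gp].
have stepA : forall k, Yp k ->
    [/\ (0 < size (z x (phi k)))%N, phi (g k) = z1 (phi k) & BG (g k)].
  move=> k /andP[/asboolP hy hyx].
  have hxy : x != phi k by rewrite eq_sym.
  have [hlast hsize hedge] := hz hxy.
  have s0 : (0 < size (z x (phi k)))%N.
    move: hlast; case: (z x (phi k)) => [|? ?] //= hl.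
    by move: hxy; rewrite -hl eqxx.
  have E0 : kappa2 * kern alpha x (phi k) <= C x (z1 (phi k)) by exact: (hedge 0%N s0).
  have ny_pos : 0 < znorm R (x - phi k) by apply: znorm_gt0; rewrite subr_eq0.
  have ny_lt : znorm R (x - phi k) < rho := hy.
  have A1 : ball1 x r (z1 (phi k)).
    rewrite /ball1 /=; case: (eqVneq (z1 (phi k)) x) => [->|hw].
      by rewrite subrr znorm0.
    rewrite ltNge; apply/negP => hrw.
    have c1 := hA2 (x := x) (y := z1 (phi k)); rewrite eq_sym hw in c1.
    have {}c1 := c1 isT.
    have k1 : kern alpha x (z1 (phi k)) <= r `^ (- p) by exact: powN_le.
    have k2 : rho `^ (- p) <= kern alpha x (phi k) by apply: powN_le => //; exact: ltW.
    have c2 : kappa2 * rho `^ (- p) <= kappa1 * r `^ (- p).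
      apply: (le_trans (ler_wpM2l (ltW hk2) k2)); apply: (le_trans E0).
      by apply: (le_trans c1); apply: ler_wpM2l => //; exact: ltW.
    move: c2; rewrite hr_rho powRM; [|exact: ltW|exact: ltW] => c2.
    apply: (aux1 hk1 hk2 (powR_gt0 (- p) rho_pos) _ hLp hkL c2).
    by rewrite powRN mulVf // lt0r_neq0 // powR_gt0.
  have [j hj] : exists j, phi j = z1 (phi k).
    apply: cpt_surj => i; exact: (ball_sub_cube A1 i).
  have hg : phi (g k) = z1 (phi k).
    rewrite /g; case: pickP => [j' /eqP //|H].
    by have := H j; rewrite hj eqxx.
  split => //; rewrite /BG /Bad /Gp; rewrite !inE /= hg.
  case: (boolP `[< ball1 x t (z1 (phi k)) >]) => //= /negP hb.
  apply/asboolP; split; first exact: A1.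
  have hwt : t <= znorm R (x - z1 (phi k)).
    by rewrite leNgt; apply/negP => h; apply: hb; apply/asboolP.
  have hw : z1 (phi k) != x.
    by apply/negP => /eqP hw; move: hwt; rewrite hw subrr znorm0 leNgt t_pos.
  split; first exact: hw.
  apply: (le_trans _ E0); rewrite /k3 /kern -/p -mulrA; apply: ler_wpM2l; first exact: ltW.
  rewrite -powRM; [|exact: ltW|exact: znorm_ge0].
  apply: powN_le => //; apply: ltW; apply: (lt_le_trans ny_lt).
  by rewrite -ht [t * M]mulrC; apply: ler_wpM2l => //; exact: ltW.
have stepB : forall j, (#|[pred k | Yp k && (g k == j)]| <= N0)%N.
  move=> j.
  have inj : injective (fun k : cubeK d (Num.trunc r) => (x, phi k)).
    by move=> a b [] /cpt_inj.
  have H1 := @counting_inj_image R _ _ _ [pred k | Yp k && (g k == j)] inj.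
  have H2 : (fun k : cubeK d (Num.trunc r) => (x, phi k)) @` [set k | [pred k | Yp k && (g k == j)] k]
     `<=` [set xy : pt d * pt d | xy.1 != xy.2 /\
              exists2 k : nat, (k < size (z xy.1 xy.2))%N &
                x = nth xy.1 (xy.1 :: z xy.1 xy.2) k /\
                phi j = nth xy.1 (z xy.1 xy.2) k].
    move=> _ [k /andP[hk /eqP hgk] <-] /=.
    have [s0 hg _] := stepA k hk.
    split; first by move: hk => /andP[_]; rewrite eq_sym.
    exists 0%N => //; split => //.
    by rewrite -hgk hg.
  have := le_trans (@counting_le R _ _ _ H2) (hcnt x (phi j)).
  by rewrite H1 lee_fin ler_nat.
have stepC : (#|Yp| <= N0 * (#|Bad| + #|Gp|))%N.
  apply: (@leq_trans (N0 * #|BG|)); last first.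
    by rewrite leq_mul2l -cardUI leq_addr orbT.
  rewrite -sum1_card (partition_big g BG); last by move=> k hk; have [_ _] := stepA k hk.
  rewrite mulnC -sum_nat_const; apply: leq_sum => j _.
  by rewrite sum1dep_card cardsE; apply: stepB.
have hBall : #|[pred k : cubeK d (Num.trunc r) | `[< ball1 x r (cpt x k) >]]|%:R
    <= (r *+ 2 + 1) ^+ d :> R.
  by have := count_ball_upper x (ltW r_pos); rewrite (counting_ball_cube x (lexx r)) lee_fin.
have hBad : #|Bad|%:R <= (t *+ 2 + 1) ^+ d :> R.
  by have := count_ball_upper x (ltW t_pos); rewrite (counting_ball_cube x t_le_r) lee_fin.
pose m := (Num.trunc (u / 2)).+1.
have hu2 : 0 <= u / 2 by lra.
have [hm1 hm2] : (m%:R <= u / 2 + 1 :> R) /\ (u / 2 < m%:R :> R).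
  have /andP[h1 h2] := truncn_itv hu2.
  by split => //; rewrite /m -addn1 natrD lerD2r.
have hdm : d%:R * m%:R < rho.
  rewrite /rho.
  have : d%:R * m%:R <= d%:R * (u / 2 + 1) :> R by rewrite ler_wpM2l //; lra.
  move=> h; apply: (le_lt_trans h); nra.
have hX : (#|[pred k : cubeK d (Num.trunc r) | phi k == x]| <= 1)%N.
  have := @counting_inj_image R _ _ phi [pred k | phi k == x] (@cpt_inj _ _ x).
  move=> H; have : (phi @` [set k | [pred k | phi k == x] k] `<=` [set x]).
    by move=> _ [k /= /eqP hk <-].
  move=> /(@counting_le R) H3; move: H3; rewrite H counting_set1 lee_fin.
  by rewrite (_ : 1 = 1%:R) // ler_nat.
have hY : (m.*2.+1 ^ d)%:R <= #|Yp|%:R + 1 :> R.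
  have := count_ball_lower x hdm; rewrite (counting_ball_cube x rho_le_r) lee_fin.
  move=> h; apply: (le_trans h); rewrite natr1 ler_nat.
  apply: (@leq_trans #|[predU Yp & [pred k : cubeK d (Num.trunc r) | phi k == x]]|).
    apply: subset_leq_card; apply/fintype.subsetP => k; rewrite !inE /= => hk.
    by case: (eqVneq (phi k) x) => hkx; rewrite ?hk ?orbT //= hkx.
  have e := cardUI Yp [pred k : cubeK d (Num.trunc r) | phi k == x].
  apply: (@leq_trans (#|Yp| + #|[pred k : cubeK d (Num.trunc r) | phi k == x]|)).
    by rewrite -e leq_addr.
  by rewrite -[X in (_ <= X)%N]addn1 leq_add2l.
have eY : ((m.*2.+1 ^ d)%N%:R : R) = (m%:R *+ 2 + 1) ^+ d.
  by rewrite natrX -addn1 natrD -mul2n natrM mulr_natl.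
rewrite eY in hY.
have hC : (#|Yp|%:R : R) <= NN%:R * (#|Bad|%:R + #|Gp|%:R).
  have : (#|Yp| <= NN * (#|Bad| + #|Gp|))%N.
    by apply: (leq_trans stepC); rewrite leq_mul2r leqnSn orbT.
  by rewrite -(ler_nat R) natrM natrD.
have htu : t * 12 * NN%:R = u.
  have D0 : (d%:R : R) != 0 by rewrite pnatr_eq0 -lt0n.
  apply: (mulIf D0); rewrite [u * _]mulrC -/rho -ht hMdef; ring.
have hr1 : 1 <= r by lra.
have hr' : r = cL * (d%:R * u) by [].
have ht1' : 1 <= t by lra.
exact: (aux2 hd cL_pos hD hN1 (ler0n _ _) (ler0n _ _) (ler0n _ _) hY hm2 hC hBad ht1' htu hBall hr' hr1 hu1).
Qed.
End Main.

Unset Implicit Arguments.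

Theorem lemma2p4 (R : realType) (d : nat) (alpha kappa1 kappa2 : R) (N0 : nat) :
  (1 <= d)%N -> 0 < alpha < 2 -> 0 < kappa1 -> 0 < kappa2 ->
  exists gamma Theta1 kappa3 : R,
    [/\ 0 < gamma < 1, 0 < Theta1, 0 < kappa3 &
      forall C : pt d -> pt d -> R,
        (forall x y, 0 <= C x y) ->
        A2 alpha C kappa1 -> A3 alpha C N0 kappa2 ->
        (forall (x : pt d) (r : R), Theta1 < r ->
           (gamma%:E * mu R (ball1 x r) <=
            mu R [set y | ball1 x r y /\ y != x /\ (kappa3 * kern alpha x y <= C x y)%R])%E)
        /\
        (forall Ct : pt d -> R, (forall x y, C x y = Ct (x - y)) ->
         forall r : R, Theta1 < r ->
           (gamma%:E * mu R (ball1 (0%R : pt d) r) <=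
            mu R [set h | ball1 (0%R : pt d) r h /\ h != 0%R /\ (kappa3 * kern alpha (0%R : pt d) h <= Ct h)%R])%E)].
Proof.
move=> hd /andP[ha _] hk1 hk2.
have hD : (1 : R) <= d%:R by rewrite ler1n.
have hN : (1 : R) <= N0.+1%:R by rewrite ler1n.
have cL1 : 1 < 1 + kappa1 / kappa2 by rewrite ltrDl divr_gt0.
have M0 : (0 : R) < (12 * d * N0.+1)%:R by rewrite ltr0n !muln_gt0 hd.
exists (2 * N0.+1%:R * (3 * (1 + kappa1 / kappa2) * d%:R) ^+ d)^-1,
  (4 * (1 + kappa1 / kappa2) * (12 * d * N0.+1)%:R * d%:R),
  (kappa2 * (12 * d * N0.+1)%:R `^ (- (d%:R + alpha))).
have K1 : 1 <= (3 * (1 + kappa1 / kappa2) * d%:R) ^+ d.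
  by apply: exprn_ege1; nra.
split.
- have G1 : 1 < 2 * N0.+1%:R * (3 * (1 + kappa1 / kappa2) * d%:R) ^+ d by nra.
  apply/andP; split; first by rewrite invr_gt0; lra.
  by rewrite invf_lt1 //; lra.
- have h4 : 0 < 4 * (1 + kappa1 / kappa2) by lra.
  by apply: mulr_gt0; [apply: mulr_gt0|lra].
- by apply: mulr_gt0 => //; apply: powR_gt0.
move=> C hC0 hA2 [z [hz hcnt]].
have P1 : forall (x : pt d) (r : R),
    4 * (1 + kappa1 / kappa2) * (12 * d * N0.+1)%:R * d%:R < r ->
    ((2 * N0.+1%:R * (3 * (1 + kappa1 / kappa2) * d%:R) ^+ d)^-1%:E * mu R (ball1 x r) <=
     mu R [set y | ball1 x r y /\ y != x /\
        (kappa2 * (12 * d * N0.+1)%:R `^ (- (d%:R + alpha)) * kern alpha x y <= C x y)%R])%E.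
  move=> x r hr.
  rewrite /mu (counting_ball_cube x (lexx r)) (@counting_sub_cube R d x r); last first.
    by move=> y [].
  rewrite -EFinM lee_fin.
  exact: (main_count hd ha hk1 hk2 hA2 hz hcnt x hr).
split; first exact: P1.
move=> Ct hCt r hr.
apply: (le_trans (P1 0 r hr)).
rewrite /mu le_eqVlt; apply/orP; left; apply/eqP.
set S1 := [set y | _ /\ _ /\ _].
have S1b : S1 `<=` ball1 0 r by move=> y [].
rewrite (@counting_sub_cube R d 0 r S1 S1b).
rewrite -(@counting_inj_image R _ _ (fun k => - cpt (0 : pt d) k)); last first.
  by move=> a b /oppr_inj /cpt_inj.
congr counting; apply/seteqP; split.
- move=> _ [k /= /asboolP [hb [hne hk]] <-]; split.
    by move: hb; rewrite /ball1 /= !sub0r ?opprK ?znormN.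
  split; first by rewrite oppr_eq0.
  by move: hk; rewrite /kern !sub0r opprK znormN hCt sub0r.
- move=> h [hb [hne hk]].
  have hb' : ball1 0 r (- h) by move: hb; rewrite /ball1 /= !sub0r ?opprK ?znormN.
  have [k hk'] : exists k : cubeK d (Num.trunc r), cpt 0 k = - h.
    by apply: cpt_surj => i; exact: (ball_sub_cube hb' i).
  exists k; last by rewrite hk' opprK.
  apply/asboolP; rewrite hk'; split => //; split; first by rewrite oppr_eq0.
  by move: hk; rewrite /kern hCt !sub0r opprK znormN.
Qed.
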